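(* Let $\mathcal F$ be a foam and $e$ a cyclic edge of $\mathcal F$ with both endpoints at the vertex $v$. Let $\mathcal N$ be a small regular neighbourhood of $v$ and let $\delta_+$ be an edge of the graph $\partial(\mathcal F\cap\mathcal N)$ such that exactly one endpoint of $\delta_+$ lies on $e$. Then the V-move at $v$ given by the 0-2 move along $\delta_+$ yields a foam $\mathcal F'$ with fewer cyclic edges than $\mathcal F$.
   Context: A foam in a compact connected three-manifold with boundary $M$ is the two-complex dual to an ideal triangulation of $M$. An edge loop is an edge with both ends at one vertex; a cyclic edge is an edge loop or a lift of one to a cover (here, in $\mathcal F$ itself, an edge loop). For a vertex $v$ with small regular neighbourhood $\mathcal N$, $\partial(\mathcal F\cap\mathcal N)$ is a complete graph on four vertices in the sphere $\partial\mathcal N$ whose edges are arcs in faces of $\mathcal F$. A 0-2 move along an arc $\delta$ properly embedded in a face and avoiding vertices pushes a thin neighbourhood of $\delta$ across the edges at its endpoints, creating two new vertices and a bigon face; the V-move at $v$ is the 0-2 move along one of these boundary arcs. *)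

(* Defs.v *)
(* combinatorial encoding of foams via their dual ideal
   triangulations (face-pairings of tetrahedra). *)
From HB Require Import structures.
From mathcomp Require Import all_boot all_fingroup.
Set Implicit Arguments.
Unset Strict Implicit.
Unset Printing Implicit Defensive.

(* An ideal triangulation with n tetrahedra (= foam with n vertices).
   A face of the triangulation is (t, f): the face of tetrahedron t opposite
   its vertex f.  [gl x] is the face glued to x, and [gm x] is the gluing map
   sending vertex labels of x.1 to vertex labels of (gl x).1.
   Foam vertices = tetrahedra, foam edges = unordered pairs {x, gl x}. *)
Record gluing (n : nat) := Gluing {
  gl : 'I_n * 'I_4 -> 'I_n * 'I_4 ;
  gm : 'I_n * 'I_4 -> {perm 'I_4} }.

Section Foam.
Variables (n : nat) (T : gluing n).

(* oriented edges of tetrahedra: (t, (u, w)) *)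
Definition edge_step : rel ('I_n * ('I_4 * 'I_4)) :=
  fun e e' => [exists i : 'I_4,
    [&& i != e.2.1, i != e.2.2 &
     e' == ((gl T (e.1, i)).1, (gm T (e.1, i) e.2.1, gm T (e.1, i) e.2.2))]].

Definition tet_adj : rel 'I_n :=
  fun s t => [exists i : 'I_4, (gl T (s, i)).1 == t].

(* [T] is the foam dual to an ideal triangulation of a compact connected
   3-manifold with boundary: every face is paired with a different face by
   a label bijection (an involutive pairing), no edge is identified with
   itself in reverse (so the truncated complex is a 3-manifold), and the
   complex is nonempty and connected. *)
Definition is_foam : Prop :=
  [/\ 0 < n,
      (forall x, gl T (gl T x) = x),
      (forall x, gl T x != x),
      (forall x, gm T x x.2 = snd (gl T x)) &
      (forall x, gm T (gl T x) = ((gm T x)^-1)%g)] /\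
  (forall t u w, u != w -> ~~ connect edge_step (t, (u, w)) (t, (w, u))) /\
  (forall s t, connect tet_adj s t).

Definition cyclic_edges : {set {set 'I_n * 'I_4}} :=
  [set [set x; gl T x] | x in [set x : 'I_n * 'I_4 | (gl T x).1 == x.1]].

End Foam.

(* The 0-2 move along the arc delta of the boundary graph
   d(F cap N(v)) = K4 joining the edge-ends (faces) i and j of vertex v.
   Dually: cut the triangulation along faces (v,i) and (v,j) (which share the
   edge of tetrahedron v complementary to {i,j}) and insert a pillow of two
   new tetrahedra P, Q (labelled like v) glued to each other by the identity
   along their faces other than i, j; P is glued to v, Q to the old partners. *)
Section VMove.
Variables (n : nat) (T : gluing n) (v : 'I_n) (i j : 'I_4).

Definition old_tet (t : 'I_n) : 'I_n.+2 := widen_ord (leqW (leqnSn n)) t.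
Definition tetP : 'I_n.+2 := inord n.
Definition tetQ : 'I_n.+2 := inord n.+1.
Definition old_face (x : 'I_n * 'I_4) : 'I_n.+2 * 'I_4 := (old_tet x.1, x.2).

Definition vmove_gl (x : 'I_n.+2 * 'I_4) : 'I_n.+2 * 'I_4 :=
  let: (t, f) := x in
  match insub (val t) : option 'I_n with
  | Some t' =>
      if (t', f) == (v, i) then (tetP, i) else
      if (t', f) == (v, j) then (tetP, j) else
      let y := gl T (t', f) in
      if y == (v, i) then (tetQ, i) else
      if y == (v, j) then (tetQ, j) else old_face y
  | None =>
      if val t == n then
        (if (f == i) || (f == j) then old_face (v, f) else (tetQ, f))
      else
        (if f == i then old_face (gl T (v, i)) else
         if f == j then old_face (gl T (v, j)) else (tetP, f))
  end.

Definition vmove_gm (x : 'I_n.+2 * 'I_4) : {perm 'I_4} :=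
  let: (t, f) := x in
  match insub (val t) : option 'I_n with
  | Some t' =>
      if ((t', f) == (v, i)) || ((t', f) == (v, j)) then 1%g
      else gm T (t', f)
  | None =>
      if val t == n then 1%g
      else (if f == i then gm T (v, i) else
            if f == j then gm T (v, j) else 1%g)
  end.

Definition vmove : gluing n.+2 := Gluing vmove_gl vmove_gm.

End VMove.

(* Main.v *)
Require Import Defs.
From mathcomp Require Import all_boot all_fingroup.
Set Implicit Arguments. Unset Strict Implicit. Unset Printing Implicit Defensive.

Section Comp.
Variables (n : nat) (T : gluing n) (v : 'I_n) (i j : 'I_4).
Local Notation G := (vmove_gl T v i j).
Local Notation M := (vmove_gm T v i j).

Lemma insub_old (t : 'I_n) : insub (val (old_tet t)) = Some t.
Proof. exact: valK. Qed.
Lemma val_tetP : val (tetP n) = n. Proof. exact: inordK. Qed.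
Lemma val_tetQ : val (tetQ n) = n.+1. Proof. exact: inordK. Qed.
Lemma insub_P : insub (val (tetP n)) = None :> option 'I_n.
Proof. by rewrite val_tetP insubF // ; apply/negbTE; rewrite ltnn. Qed.
Lemma insub_Q : insub (val (tetQ n)) = None :> option 'I_n.
Proof. by rewrite val_tetQ insubF // ; apply/negbTE; rewrite -leqNgt leqnSn. Qed.

Lemma glO t f : G (old_face (t, f)) =
      if (t, f) == (v, i) then (tetP n, i) else
      if (t, f) == (v, j) then (tetP n, j) else
      let y := gl T (t, f) in
      if y == (v, i) then (tetQ n, i) else
      if y == (v, j) then (tetQ n, j) else old_face y.
Proof. by rewrite /= insub_old. Qed.
Lemma gmO t f : M (old_face (t, f)) =
      if ((t, f) == (v, i)) || ((t, f) == (v, j)) then 1%g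
      else gm T (t, f).
Proof. by rewrite /= insub_old. Qed.
Lemma glP f : G (tetP n, f) =
   if (f == i) || (f == j) then old_face (v, f) else (tetQ n, f).
Proof. by rewrite /= insub_P val_tetP eqxx. Qed.
Lemma gmP f : M (tetP n, f) = 1%g.
Proof. by rewrite /= insub_P val_tetP eqxx. Qed.
Lemma glQ f : G (tetQ n, f) =
  if f == i then old_face (gl T (v, i)) else
  if f == j then old_face (gl T (v, j)) else (tetP n, f).
Proof. by rewrite /= insub_Q val_tetQ eqn_leq ltnn. Qed.
Lemma gmQ f : M (tetQ n, f) =
  if f == i then gm T (v, i) else if f == j then gm T (v, j) else 1%g.
Proof. by rewrite /= insub_Q val_tetQ eqn_leq ltnn. Qed.

Lemma tet_cases (t : 'I_n.+2) :
  [\/ exists t', t = old_tet t', t = tetP n | t = tetQ n].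
Proof.
have [lt|ge] := ltnP (val t) n.
  by apply: Or31; exists (Ordinal lt); apply: val_inj.
have := ltn_ord t; rewrite ltnS leq_eqVlt => /orP[/eqP e|].
  by apply: Or33; apply: val_inj; rewrite val_tetQ.
rewrite ltnS => le; apply: Or32; apply: val_inj; rewrite val_tetP.
by apply/eqP; rewrite eqn_leq le ge.
Qed.

Lemma old_tet_inj : injective (@old_tet n).
Proof. by move=> x y e; apply: val_inj; exact: (congr1 val e). Qed.
Lemma old_face_inj : injective (@old_face n).
Proof. by move=> [t f] [t2 f2]; case=> /val_inj -> ->. Qed.
Lemma oldP t : (old_tet t == tetP n) = false.
Proof. by apply/negbTE; apply/eqP=> /(congr1 val); rewrite val_tetP /= => e; have := ltn_ord t; rewrite e ltnn. Qed.
Lemma oldQ t : (old_tet t == tetQ n) = false.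
Proof. by apply/negbTE; apply/eqP=> /(congr1 val); rewrite val_tetQ /= => e; have := ltn_ord t; rewrite e ltnNge leqnSn. Qed.
Lemma PQ : (tetP n == tetQ n) = false.
Proof. by apply/negbTE; apply/eqP=> /(congr1 val); rewrite val_tetP val_tetQ => e; have := ltnSn n; rewrite -{2}e ltnn. Qed.
End Comp.

Section Main.
Variables (n : nat) (T : gluing n) (v : 'I_n) (a b i j : 'I_4).
Hypotheses (gl2 : forall x, gl T (gl T x) = x) (glnx : forall x, gl T x != x)
  (gmx : forall x, gm T x x.2 = (gl T x).2)
  (gmi : forall x, gm T (gl T x) = ((gm T x)^-1)%g)
  (Hab : gl T (v,a) = (v,b)) (Hij : i != j)
  (Hx : (i \in [::a;b]) (+) (j \in [::a;b])).
Local Notation G := (vmove_gl T v i j).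
Local Notation M := (vmove_gm T v i j).

Lemma key_i : (gl T (v,i) == (v,j)) = false.
Proof.
apply/negbTE/eqP => E.
have Ej : gl T (v,j) = (v,i) by rewrite -E gl2.
have Hba : gl T (v,b) = (v,a) by rewrite -Hab gl2.
move: Hx; rewrite !inE.
case/boolP: (i == a) => [/eqP ia|ia].
  by subst i; move: E; rewrite Hab => -[->]; rewrite !eqxx !orbT.
case/boolP: (i == b) => [/eqP ib|ib].
  by subst i; move: E; rewrite Hba => -[->]; rewrite !eqxx !orbT.
case/boolP: (j == a) => [/eqP ja|ja].
  by subst j; move: Ej; rewrite Hab => -[eb]; rewrite eb eqxx in ib.
case/boolP: (j == b) => [/eqP jb|jb] //.
by subst j; move: Ej; rewrite Hba => -[eb]; rewrite eb eqxx in ia.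
Qed.
Lemma key_j : (gl T (v,j) == (v,i)) = false.
Proof. apply/negbTE/eqP => E; have := key_i; by rewrite -E gl2 eqxx. Qed.
Lemma nfix x : (gl T x == x) = false.
Proof. exact/negbTE. Qed.

Lemma glO' x : G (old_face x) =
      if x == (v, i) then (tetP n, i) else
      if x == (v, j) then (tetP n, j) else
      let y := gl T x in
      if y == (v, i) then (tetQ n, i) else
      if y == (v, j) then (tetQ n, j) else old_face y.
Proof. by case: x => t f; rewrite glO. Qed.
Lemma gmO' x : M (old_face x) =
      if (x == (v, i)) || (x == (v, j)) then 1%g else gm T x.
Proof. by case: x => t f; rewrite gmO. Qed.

Lemma Pold t : (tetP n == old_tet t) = false. Proof. by rewrite eq_sym oldP. Qed.
Lemma Qold t : (tetQ n == old_tet t) = false. Proof. by rewrite eq_sym oldQ. Qed.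
Lemma QP : (tetQ n == tetP n) = false. Proof. by rewrite eq_sym PQ. Qed.
Lemma ji : (j == i) = false. Proof. by rewrite eq_sym; apply/negbTE. Qed.
Lemma ij : (i == j) = false. Proof. exact/negbTE. Qed.

Lemma vij : ((v,i) == (v,j)) = false. Proof. by rewrite xpair_eqE ij andbF. Qed.
Lemma vji : ((v,j) == (v,i)) = false. Proof. by rewrite xpair_eqE ji andbF. Qed.

Lemma G2 x : G (G x) = x.
Proof.
case: x => t f; case: (tet_cases t) => [[t' ->]| -> | ->].
- rewrite glO; case: ifP => [/eqP [-> ->]|ni].
    by rewrite glP eqxx.
  case: ifP => [/eqP [-> ->]|nj].
    by rewrite glP eqxx orbT.
  rewrite /=; case: ifP => [/eqP Ey|ny].
    by rewrite glQ eqxx -Ey gl2.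
  case: ifP => [/eqP Ey|ny'].
    by rewrite glQ ji eqxx -Ey gl2.
  by rewrite glO' ny ny' gl2 /= ni nj.
- rewrite glP; case: ifP => [/orP[]/eqP ->|nf].
    by rewrite glO' eqxx.
  by rewrite glO' vji eqxx.
  by rewrite glQ; move/norP: nf => [/negbTE -> /negbTE ->].
- rewrite glQ; case: ifP => [/eqP ->|ni].
    by rewrite glO' nfix key_i gl2 /= eqxx.
  case: ifP => [/eqP ->|nj].
    by rewrite glO' key_j nfix gl2 /= vji eqxx.
  by rewrite glP ni nj.
Qed.

Lemma Gnfix x : G x != x.
Proof.
case: x => t f; case: (tet_cases t) => [[t' ->]| -> | ->].
- rewrite glO; case: ifP => [/eqP [-> ->]|ni].
    by rewrite xpair_eqE Pold.
  case: ifP => [/eqP [-> ->]|nj].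
    by rewrite xpair_eqE Pold.
  rewrite /=; case: ifP => [/eqP Ey|ny].
    by rewrite xpair_eqE Qold.
  case: ifP => [/eqP Ey|ny'].
    by rewrite xpair_eqE Qold.
  by rewrite -[(old_tet t', f)]/(old_face (t',f)) (inj_eq (@old_face_inj n)) nfix.
- by rewrite glP; case: ifP; rewrite xpair_eqE ?oldP ?QP.
- by rewrite glQ; case: ifP => _; [|case: ifP => _]; rewrite xpair_eqE ?oldQ ?PQ.
Qed.

Lemma Mx x : M x x.2 = (G x).2.
Proof.
case: x => t f; case: (tet_cases t) => [[t' ->]| -> | ->].
- rewrite glO gmO /=.
  have [[-> ->]|ni] := eqVneq (t',f) (v,i).
    by rewrite perm1.
  rewrite /=.
  have [[e1 e2]|nj] := eqVneq (t',f) (v,j); first subst.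
    by rewrite perm1.
  rewrite /=; have := gmx (t', f); rewrite /= => ->.
  case: ifP => [/eqP -> //|ny].
  by case: ifP => [/eqP -> //|ny'].
- by rewrite glP gmP perm1; case: ifP.
- rewrite glQ gmQ; case: ifP => [/eqP ->|ni].
    by rewrite gmx.
  case: ifP => [/eqP ->|nj].
    by rewrite gmx.
  by rewrite perm1.
Qed.

Lemma Minv x : M (G x) = ((M x)^-1)%g.
Proof.
case: x => t f; case: (tet_cases t) => [[t' ->]| -> | ->].
- rewrite glO gmO /=.
  have [[-> ->]|ni] := eqVneq (t',f) (v,i).
    by rewrite gmP invg1.
  rewrite /=.
  have [[e1 e2]|nj] := eqVneq (t',f) (v,j); first subst.
    by rewrite gmP invg1.
  rewrite /=; case: ifP => [/eqP Ey|ny].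
    by rewrite gmQ eqxx -Ey gmi.
  case: ifP => [/eqP Ey|ny'].
    by rewrite gmQ ji eqxx -Ey gmi.
  by rewrite gmO' ny ny' gmi.
- rewrite glP gmP invg1; case: ifP => [/orP[]/eqP ->|nf].
    by rewrite gmO' eqxx.
  by rewrite gmO' eqxx orbT.
  by rewrite gmQ; move/norP: nf => [/negbTE -> /negbTE ->].
- rewrite glQ gmQ; have [_|ni] := eqVneq f i.
    by rewrite gmO' nfix key_i gmi.
  have [_|nj] := eqVneq f j.
    by rewrite gmO' key_j nfix gmi.
  by rewrite gmP invg1.
Qed.

Definition proj (t : 'I_n.+2) : 'I_n :=
  if insub (val t) is Some t' then t' else v.
Definition pe (e : 'I_n.+2 * ('I_4 * 'I_4)) := (proj e.1, e.2).
Lemma projO t : proj (old_tet t) = t. Proof. by rewrite /proj insub_old. Qed.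
Lemma projP : proj (tetP n) = v. Proof. by rewrite /proj insub_P. Qed.
Lemma projQ : proj (tetQ n) = v. Proof. by rewrite /proj insub_Q. Qed.

Lemma gl_vm x : gl (vmove T v i j) x = G x. Proof. by []. Qed.
Lemma gm_vm x : gm (vmove T v i j) x = M x. Proof. by []. Qed.

Lemma connect_homo (T1 T2 : finType) (e1 : rel T1) (e2 : rel T2) (f : T1 -> T2) :
  (forall x y, e1 x y -> connect e2 (f x) (f y)) ->
  forall x y, connect e1 x y -> connect e2 (f x) (f y).
Proof.
move=> H x y /connectP [p]; elim: p x => [|z p IH] x /=; first by move=> _ ->.
by case/andP => exz pz ly; apply: connect_trans (H _ _ exz) (IH _ pz ly).
Qed.

Lemma old_step t k u w : k != u -> k != w ->
  connect (edge_step T) (t, (u, w))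
    ((gl T (t, k)).1, (gm T (t, k) u, gm T (t, k) w)).
Proof.
move=> ku kw; apply: connect1; apply/existsP; exists k.
by rewrite ku kw /=.
Qed.

Lemma step_homo e e' : edge_step (vmove T v i j) e e' ->
  connect (edge_step T) (pe e) (pe e').
Proof.
case: e => t [u w]; case: e' => t2 [u2 w2].
move/existsP => [k /and3P [ku kw /eqP ->]].
rewrite !gl_vm !gm_vm /pe; rewrite [(t, (u, w)).1]/= [(t, (u, w)).2]/=.
case: (tet_cases t) => [[t' ->]| -> | ->].
- rewrite projO glO gmO /=.
  have [[e1 e2]|ni] := eqVneq (t',k) (v,i).
    by subst; rewrite /= projP !perm1.
  have [[e1 e2]|nj] := eqVneq (t',k) (v,j).
    by subst; rewrite /= projP !perm1.
  rewrite /=.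
  have [Ey|ny] := eqVneq (gl T (t',k)) (v,i).
    by rewrite /= projQ; have := old_step t' ku kw; rewrite Ey.
  have [Ey|ny'] := eqVneq (gl T (t',k)) (v,j).
    by rewrite /= projQ; have := old_step t' ku kw; rewrite Ey.
  by rewrite /= projO; apply: old_step.
- rewrite projP glP gmP !perm1; case: ifP => _ /=.
    by rewrite projO.
  by rewrite projQ.
- rewrite projQ glQ gmQ; have [ei|ni] := eqVneq k i.
    by rewrite /= projO; apply: old_step; rewrite -ei.
  have [ej|nj] := eqVneq k j.
    by rewrite /= projO; apply: old_step; rewrite -ej.
  by rewrite /= projP !perm1.
Qed.

Lemma orient (Hor : forall t u w, u != w ->
     ~~ connect (edge_step T) (t, (u, w)) (t, (w, u))) t u w :
  u != w -> ~~ connect (edge_step (vmove T v i j)) (t, (u, w)) (t, (w, u)).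
Proof.
move=> uw; apply/negP => /(connect_homo step_homo) /=.
by apply/negP; apply: Hor.
Qed.

Local Notation adj := (tet_adj (vmove T v i j)).

Lemma adj_impl x y : adj x y -> adj y x.
Proof.
move/existsP => [k /eqP E]; apply/existsP; exists (G (x, k)).2.
by rewrite gl_vm -E -surjective_pairing G2.
Qed.
Lemma adj_sym : symmetric adj.
Proof. by move=> x y; apply/idP/idP; apply: adj_impl. Qed.
Lemma csym : connect_sym adj.
Proof. exact: sym_connect_sym adj_sym. Qed.

Lemma adj_face x k : connect adj x (G (x, k)).1.
Proof. by apply: connect1; apply/existsP; exists k; rewrite gl_vm. Qed.

Lemma exists_other : exists f : 'I_4, (f != i) && (f != j).
Proof.
have: 0 < #|~: [set i; j]|.
  have H := cardsC [set i; j]; rewrite cards2 card_ord in H.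
  by rewrite lt0n; apply/eqP => H0; rewrite H0 addn0 in H; case: (i != j) H.
by case/card_gt0P => f; rewrite in_setC in_set2 negb_or => H; exists f.
Qed.

Lemma vP : connect adj (old_tet v) (tetP n).
Proof. by have := adj_face (old_tet v) i; rewrite glO eqxx. Qed.
Lemma PQc : connect adj (tetP n) (tetQ n).
Proof.
have [f /andP [fi fj]] := exists_other.
by have := adj_face (tetP n) f; rewrite glP (negbTE fi) (negbTE fj).
Qed.
Lemma Qi : connect adj (tetQ n) (old_tet (gl T (v, i)).1).
Proof. by have := adj_face (tetQ n) i; rewrite glQ eqxx. Qed.
Lemma Qj : connect adj (tetQ n) (old_tet (gl T (v, j)).1).
Proof. by have := adj_face (tetQ n) j; rewrite glQ ji eqxx. Qed.
Lemma vQ : connect adj (old_tet v) (tetQ n).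
Proof. exact: connect_trans vP PQc. Qed.
Lemma Qv : connect adj (tetQ n) (old_tet v).
Proof. by rewrite csym vQ. Qed.

Lemma conn_old s t : tet_adj T s t -> connect adj (old_tet s) (old_tet t).
Proof.
move/existsP => [k /eqP <-].
have [[e1 e2]|ni] := eqVneq (s,k) (v,i).
  by subst; apply: connect_trans vQ Qi.
have [[e1 e2]|nj] := eqVneq (s,k) (v,j).
  by subst; apply: connect_trans vQ Qj.
have := adj_face (old_tet s) k; rewrite glO (negbTE ni) (negbTE nj) /=.
have [Ey|ny] := eqVneq (gl T (s,k)) (v,i).
  by rewrite Ey /= => H; apply: connect_trans H Qv.
have [Ey|ny'] := eqVneq (gl T (s,k)) (v,j).
  by rewrite Ey /= => H; apply: connect_trans H Qv.
by [].
Qed.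

Lemma all_conn (Hcon : forall s t, connect (tet_adj T) s t) x y : connect adj x y.
Proof.
have Hv z : connect adj (old_tet v) z.
  case: (tet_cases z) => [[t' ->]| -> | ->]; last exact: vQ; last exact: vP.
  exact: (connect_homo conn_old (Hcon v t')).
by apply: connect_trans (Hv y); rewrite csym.
Qed.

Lemma ij_in : (i \in [:: a; b]) || (j \in [:: a; b]).
Proof. by move: Hx; case: (i \in _); case: (j \in _). Qed.

Local Notation E := [set (v, a); (v, b)].

Lemma cyc_sub : cyclic_edges (vmove T v i j) \subset
   [set (@old_face n) @: S | S : {set 'I_n * 'I_4} in cyclic_edges T :\ E].
Proof.
apply/subsetP => S /imsetP [[t f]]; rewrite inE => Hx1 ->.
move: Hx1; rewrite gl_vm.
case: (tet_cases t) => [[t' ->]| -> | ->].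
- rewrite glO.
  have [[e1 e2]|ni] := eqVneq (t',f) (v,i); first by rewrite /= Pold.
  have [[e1 e2]|nj] := eqVneq (t',f) (v,j); first by rewrite /= Pold.
  rewrite /=.
  have [Ey|ny] := eqVneq (gl T (t',f)) (v,i); first by rewrite /= Qold.
  have [Ey|ny'] := eqVneq (gl T (t',f)) (v,j); first by rewrite /= Qold.
  rewrite /= (inj_eq (@old_tet_inj n)) => Hy1.
  apply/imsetP; exists [set (t',f); gl T (t',f)]; last first.
    by rewrite imsetU1 imset_set1.
  rewrite in_setD1; apply/andP; split; last first.
    by apply/imsetP; exists (t',f) => //; rewrite inE.
  apply/negP => /eqP HE.
  have H2 c : c \in [:: a; b] -> ((v, c) \in [set (t', f); gl T (t', f)]).
    by rewrite HE in_set2 !inE => /orP[] /eqP ->; rewrite eqxx ?orbT.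
  case/orP: ij_in => /H2; rewrite in_set2 => /orP[] /eqP Hc.
  + by rewrite Hc eqxx in ni.
  + by rewrite Hc eqxx in ny.
  + by rewrite Hc eqxx in nj.
  + by rewrite Hc eqxx in ny'.
- by rewrite glP; case: ifP => _; rewrite /= ?oldP ?QP.
- by rewrite glQ; case: ifP => _; [|case: ifP => _]; rewrite /= ?oldQ ?PQ.
Qed.

Lemma card_lt : #|cyclic_edges (vmove T v i j)| < #|cyclic_edges T|.
Proof.
have EC : E \in cyclic_edges T.
  by apply/imsetP; exists (v, a); rewrite ?inE Hab //=.
rewrite (cardsD1 E (cyclic_edges T)) EC add1n ltnS.
apply: leq_trans (subset_leq_card cyc_sub) _.
exact: leq_imset_card.
Qed.
End Main.

Theorem mainTheorem6 (n : nat) (T : gluing n) (v : 'I_n) (a b i j : 'I_4) :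
  is_foam T ->
  gl T (v, a) = (v, b) ->
  i != j ->
  (i \in [:: a; b]) (+) (j \in [:: a; b]) ->
  is_foam (vmove T v i j) /\
  #|cyclic_edges (vmove T v i j)| < #|cyclic_edges T|.
Proof.
move=> [[Hn gl2 glnx gmx gmi] [Hor Hcon]] Hab Hij Hx.
split; last by apply: (@card_lt n T v a b i j).
split; [split|split].
- by [].
- by move=> x; rewrite !gl_vm; apply: (@G2 n T v a b i j).
- by move=> x; rewrite gl_vm; apply: (@Gnfix n T v i j).
- by move=> x; rewrite gl_vm gm_vm; apply: (@Mx n T v i j).
- by move=> x; rewrite !gl_vm !gm_vm; apply: (@Minv n T v a b i j).
- by move=> t u w; apply: (@orient n T v i j).
- by move=> s t; apply: (@all_conn n T v a b i j).
Qed.
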